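(* Let $J\ge1$ and let $\gamma\subset\mathbb R^2$ be a locally rectifiable curve joining $x$ to $y$, where $x,y\in\mathbb R^2$. Then $car(\gamma,J)$ is a $J$-carrot John domain (with center $y$). More precisely, for every $z\in car(\gamma,J)$ there exist a rectifiable curve $\gamma_z$ joining $z$ to $y$ and a point $\eta\in\gamma$ such that $\gamma[\eta,y]=\gamma_z[\eta,y]$ and, for each $a\in\gamma[\eta,y]$, $$\ell(\gamma_z[z,a])\le\ell(\gamma[x,a]),\qquad car(\gamma_z,J)\subset car(\gamma,J).$$
   Context: For a curve $\gamma$ and points $p,q\in\gamma$, $\gamma[p,q]$ denotes the subcurve joining $p$ to $q$ and $\ell(\cdot)$ the Euclidean length. For a curve $\gamma$ starting at a point $v$ (its vertex), the $J$-carrot is $car(\gamma,J):=\bigcup\{B(w,\ell(\gamma[v,w])/J): w\in\gamma\setminus\{v\}\}$; thus $car(\gamma,J)$ has vertex $x$ and $car(\gamma_z,J)$ has vertex $z$. A domain $D$ is a $J$-carrot John domain with center $y$ if every point $p\in D$ can be joined to $y$ by a curve $\beta\subset D$ with $car(\beta,J)\subset D$. *)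

(* Defs.v *)
From Stdlib Require Import Reals Lra List Sorted.
From Coquelicot Require Import Coquelicot.
Open Scope R_scope.

Definition pt := (R * R)%type.

Definition dist2 (p q : pt) : R :=
  sqrt ((fst p - fst q) ^ 2 + (snd p - snd q) ^ 2).

(* A curve is a map g : R -> R^2, continuous on the parameter interval [0,1]
   (values outside [0,1] are irrelevant). *)
Definition is_curve (g : R -> pt) : Prop :=
  forall t, 0 <= t <= 1 -> forall eps, 0 < eps ->
    exists delta, 0 < delta /\
      forall s, 0 <= s <= 1 -> Rabs (s - t) < delta -> dist2 (g s) (g t) < eps.

Fixpoint psum (g : R -> pt) (l : list R) : R :=
  match l with
  | t1 :: ((t2 :: _) as rest) => dist2 (g t1) (g t2) + psum g rest
  | _ => 0
  end.

Definition poly_sums (g : R -> pt) (a b : R) (L : R) : Prop :=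
  exists l : list R, Sorted.Sorted Rle l /\ List.Forall (fun t => a <= t <= b) l /\ L = psum g l.

Definition lenb (g : R -> pt) (a b : R) : Rbar := Lub_Rbar (poly_sums g a b).

Definition rectifiable (g : R -> pt) (a b : R) : Prop := is_finite (lenb g a b).

(* real length; only meaningful when rectifiable *)
Definition len (g : R -> pt) (a b : R) : R := real (lenb g a b).

Definition locally_rectifiable (g : R -> pt) : Prop :=
  forall a b, 0 <= a -> a <= b -> b <= 1 -> rectifiable g a b.

Definition car (g : R -> pt) (J : R) (p : pt) : Prop :=
  exists t, 0 < t <= 1 /\ g t <> g 0 /\ dist2 p (g t) < len g 0 t / J.

Definition subset2 (A B : pt -> Prop) : Prop := forall p, A p -> B p.

Definition open2 (D : pt -> Prop) : Prop :=
  forall p, D p -> exists r, 0 < r /\ forall q, dist2 q p < r -> D q.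

Definition connected2 (D : pt -> Prop) : Prop :=
  ~ exists U V : pt -> Prop, open2 U /\ open2 V /\
      (forall p, D p -> U p \/ V p) /\
      (exists p, D p /\ U p) /\ (exists p, D p /\ V p) /\
      (forall p, D p -> U p -> V p -> False).

Definition domain2 (D : pt -> Prop) : Prop := open2 D /\ connected2 D.

Definition carrot_John (D : pt -> Prop) (J : R) (y : pt) : Prop :=
  domain2 D /\
  forall p, D p -> exists b : R -> pt,
    is_curve b /\ b 0 = p /\ b 1 = y /\ rectifiable b 0 1 /\
    (forall t, 0 <= t <= 1 -> D (b t)) /\
    subset2 (car b J) D.

(* Main.v *)
Require Import Defs.
From Stdlib Require Import Reals.
From Coquelicot Require Import Coquelicot.
From Stdlib Require Import Lra List Sorted Classical.
Open Scope R_scope.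

Lemma mink a b c d : sqrt ((a+c)^2+(b+d)^2) <= sqrt (a^2+b^2) + sqrt (c^2+d^2).
Proof.
  pose (X := a^2+b^2). pose (Y := c^2+d^2).
  assert (HX: 0 <= X) by (unfold X; nra).
  assert (HY: 0 <= Y) by (unfold Y; nra).
  assert (Hc: a*c+b*d <= sqrt X * sqrt Y).
  { rewrite <- sqrt_mult by lra.
    destruct (Rle_dec (a*c+b*d) 0).
    - pose proof (sqrt_pos (X*Y)); lra.
    - rewrite <- (sqrt_pow2 (a*c+b*d)) by lra. apply sqrt_le_1_alt. unfold X, Y. pose proof (pow2_ge_0 (a*d-b*c)). nra. }
  fold X; fold Y. pose proof (sqrt_pos X); pose proof (sqrt_pos Y).
  rewrite <- (sqrt_pow2 (sqrt X + sqrt Y)) by lra.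
  apply sqrt_le_1_alt.
  assert (E1: sqrt X ^ 2 = X) by (apply pow2_sqrt; lra).
  assert (E2: sqrt Y ^ 2 = Y) by (apply pow2_sqrt; lra).
  unfold X, Y in *. nra.
Qed.

Lemma dist2_tri p q r : dist2 p r <= dist2 p q + dist2 q r.
Proof.
  unfold dist2.
  replace (fst p - fst r) with ((fst p - fst q) + (fst q - fst r)) by ring.
  replace (snd p - snd r) with ((snd p - snd q) + (snd q - snd r)) by ring.
  apply mink.
Qed.

Lemma dist2_sym p q : dist2 p q = dist2 q p.
Proof. unfold dist2. f_equal. ring. Qed.

Lemma dist2_pos p q : 0 <= dist2 p q.
Proof. apply sqrt_pos. Qed.

Lemma dist2_refl p : dist2 p p = 0.
Proof. unfold dist2. replace ((fst p - fst p) ^ 2 + (snd p - snd p) ^ 2) with 0 by ring. apply sqrt_0. Qed.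

Lemma poly_nil g a b : poly_sums g a b 0.
Proof. exists nil. repeat split; auto. Qed.

Lemma len_ub g a b P : rectifiable g a b -> poly_sums g a b P -> P <= len g a b.
Proof.
  intros Hr HP. unfold len. unfold rectifiable, lenb in *.
  destruct (Lub_Rbar_correct (poly_sums g a b)) as [Hub _].
  specialize (Hub _ HP). rewrite <- Hr in Hub. simpl in Hub. exact Hub.
Qed.

Lemma len_ge0 g a b : rectifiable g a b -> 0 <= len g a b.
Proof. intros Hr. apply len_ub; auto. apply poly_nil. Qed.

Lemma len_approx g a b eps : rectifiable g a b -> 0 < eps ->
  exists l, Sorted.Sorted Rle l /\ List.Forall (fun t => a <= t <= b) l /\ len g a b - eps < psum g l.
Proof.
  intros Hr He. apply NNPP. intros Hn.
  assert (Hub : is_ub_Rbar (poly_sums g a b) (len g a b - eps)).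
  { intros P [l [Hs [Hf ->]]]. simpl. apply Rnot_lt_le. intro Hl. apply Hn. exists l; auto. }
  destruct (Lub_Rbar_correct (poly_sums g a b)) as [_ Hl].
  specialize (Hl _ Hub). unfold len, rectifiable, lenb in *. rewrite <- Hr in Hl. simpl in Hl. lra.
Qed.

Lemma len_bound g a b M : (forall P, poly_sums g a b P -> P <= M) ->
  rectifiable g a b /\ len g a b <= M.
Proof.
  intros H. destruct (Lub_Rbar_correct (poly_sums g a b)) as [Hub Hl].
  assert (H1 := Hub 0 (poly_nil g a b)).
  assert (H2 : Rbar_le (Lub_Rbar (poly_sums g a b)) M).
  { apply Hl. intros P HP. simpl. apply H. auto. }
  unfold rectifiable, len, lenb.
  destruct (Lub_Rbar (poly_sums g a b)); simpl in *; try contradiction.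
  split; auto. reflexivity.
Qed.

Lemma psum_ge0 g l : 0 <= psum g l.
Proof.
  induction l as [|a l IH]; simpl; [lra|].
  destruct l as [|b l']; [lra|]. pose proof (dist2_pos (g a) (g b)). lra.
Qed.

Lemma psum_app g l1 l2 : psum g l1 + psum g l2 <= psum g (l1 ++ l2).
Proof.
  induction l1 as [|a l1 IH]; simpl; [lra|].
  destruct l1 as [|b l1'].
  - simpl. destruct l2 as [|c l2']; simpl; [lra|].
    pose proof (dist2_pos (g a) (g c)). lra.
  - simpl in *. lra.
Qed.

Lemma sorted_app l1 l2 m : Sorted.Sorted Rle l1 -> Sorted.Sorted Rle l2 ->
  List.Forall (fun t => t <= m) l1 -> List.Forall (fun t => m <= t) l2 ->
  Sorted.Sorted Rle (l1 ++ l2).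
Proof.
  induction l1 as [|a l1 IH]; intros H1 H2 F1 F2; simpl; auto.
  apply Sorted_inv in H1. destruct H1 as [H1 Hd].
  inversion F1; subst.
  constructor. apply IH; auto.
  destruct l1 as [|b l1'].
  - simpl. destruct l2 as [|c l2']; constructor. inversion F2; subst. lra.
  - simpl. constructor. inversion Hd; auto.
Qed.

Lemma superadd g a m b : a <= m -> m <= b -> rectifiable g a m -> rectifiable g m b -> rectifiable g a b ->
  len g a m + len g m b <= len g a b.
Proof.
  intros Ham Hmb H1 H2 H3. apply Rnot_lt_le. intros Hlt.
  set (e := (len g a m + len g m b - len g a b) / 4).
  assert (He : 0 < e) by (unfold e; lra).
  destruct (len_approx g a m e H1 He) as [l1 [S1 [F1 P1]]].
  destruct (len_approx g m b e H2 He) as [l2 [S2 [F2 P2]]].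
  assert (HP : poly_sums g a b (psum g (l1 ++ l2))).
  { exists (l1 ++ l2). split; [|split; auto].
    - apply sorted_app with m; auto.
      + eapply Forall_impl; [|exact F1]. simpl. intros t Ht; lra.
      + eapply Forall_impl; [|exact F2]. simpl. intros t Ht; lra.
    - apply Forall_app. split.
      + eapply Forall_impl; [|exact F1]. simpl. intros t Ht. lra.
      + eapply Forall_impl; [|exact F2]. simpl. intros t Ht. lra. }
  pose proof (len_ub _ _ _ _ H3 HP). pose proof (psum_app g l1 l2). unfold e in *. lra.
Qed.

Lemma two_pt g a b : a <= b -> rectifiable g a b -> dist2 (g a) (g b) <= len g a b.
Proof.
  intros Hab Hr. apply len_ub; auto.
  exists (a :: b :: nil). split; [|split].
  - apply Sorted_cons; [apply Sorted_cons; auto | apply HdRel_cons; exact Hab].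
  - apply Forall_cons; [lra|]. apply Forall_cons; [lra|]. apply Forall_nil.
  - simpl. ring.
Qed.

Definition lrect (g : R -> pt) a b (H : locally_rectifiable g) (Ha : 0 <= a) (Hab : a <= b) (Hb : b <= 1) :
  rectifiable g a b := H a b Ha Hab Hb.

Lemma superadd' g a m b : locally_rectifiable g -> 0 <= a -> a <= m -> m <= b -> b <= 1 ->
  len g a m + len g m b <= len g a b.
Proof. intros H; intros. apply superadd; auto; apply H; lra. Qed.

Lemma len_mono g a m b : locally_rectifiable g -> 0 <= a -> a <= m -> m <= b -> b <= 1 ->
  len g a m <= len g a b.
Proof. intros H; intros. pose proof (superadd' g a m b H). pose proof (len_ge0 g m b (H m b ltac:(lra) ltac:(lra) ltac:(lra))). lra. Qed.

Lemma len_mono_l g a m b : locally_rectifiable g -> 0 <= a -> a <= m -> m <= b -> b <= 1 ->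
  len g m b <= len g a b.
Proof. intros H; intros. pose proof (superadd' g a m b H). pose proof (len_ge0 g a m (H a m ltac:(lra) ltac:(lra) ltac:(lra))). lra. Qed.

Lemma psum_const g x l : List.Forall (fun t => g t = x) l -> psum g l = 0.
Proof.
  induction l as [|a l IH]; intros F; simpl; auto.
  apply Forall_inv in F as F0. apply Forall_inv_tail in F as F1.
  destruct l as [|b l']; auto.
  apply Forall_inv in F1 as F2.
  rewrite IH; auto. rewrite F0, F2, dist2_refl. ring.
Qed.


Lemma sup_lemma g h r x eta : is_curve g -> 0 <= h -> h <= r -> r <= 1 ->
  g h <> x -> g r = x -> 0 < eta ->
  exists s, h <= s <= r /\ g s <> x /\ dist2 (g s) x < eta.
Proof.
  intros Hc H0 Hhr Hr1 Hgh Hgr He.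
  set (E := fun s => h <= s <= r /\ g s <> x).
  destruct (completeness E) as [m [Hub Hlub]].
  { exists r. intros s [Hs _]. lra. }
  { exists h. split; [lra|auto]. }
  assert (Hhm : h <= m) by (apply Hub; split; [lra|auto]).
  assert (Hmr : m <= r) by (apply Hlub; intros s [Hs _]; lra).
  destruct (Hc m ltac:(lra) (eta/2) ltac:(lra)) as [d [Hd Hcd]].
  set (q := Rmin r (m + d/2)).
  assert (Hq1 : m <= q <= r) by (unfold q; unfold Rmin; destruct Rle_dec; lra).
  assert (Hgq : g q = x).
  { destruct (classic (g q = x)) as [|Hn]; auto.
    assert (q <= m) by (apply Hub; split; [lra|auto]).
    assert (q = r) by (unfold q in *; unfold Rmin in *; destruct Rle_dec; lra).
    congruence. }
  assert (Hdq : dist2 (g q) (g m) < eta/2).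
  { apply Hcd; [lra|]. unfold q; unfold Rmin; destruct Rle_dec; unfold Rabs; destruct Rcase_abs; lra. }
  assert (Hs : exists s, E s /\ m - d < s).
  { apply NNPP; intro Hn.
    assert (m <= m - d); [|lra].
    apply Hlub. intros s Es. apply Rnot_lt_le. intro. apply Hn. exists s; auto. }
  destruct Hs as [s [[Hs1 Hs2] Hs3]].
  assert (s <= m) by (apply Hub; split; auto).
  assert (Hds : dist2 (g s) (g m) < eta/2).
  { apply Hcd; [lra|]. unfold Rabs; destruct Rcase_abs; lra. }
  exists s. split; [lra|split; auto].
  rewrite <- Hgq.
  pose proof (dist2_tri (g s) (g m) (g q)) as Ht. rewrite (dist2_sym (g m)) in Ht. lra.
Qed.

Lemma psum_cons2 g h a l : psum g (h :: a :: l) = dist2 (g h) (g a) + psum g (a :: l).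
Proof. reflexivity. Qed.

Lemma tail_lemma g r x eta : is_curve g -> r <= 1 -> g r = x -> 0 < eta ->
  forall l h, Sorted.Sorted Rle (h::l) -> List.Forall (fun t => 0 <= t <= r) (h::l) ->
  List.Forall (fun t => g t = x) (h::l) \/
  exists s l', h <= s <= r /\ g s <> x /\ dist2 (g s) x < eta /\
    Sorted.Sorted Rle (h::l') /\ List.Forall (fun t => h <= t <= s) (h::l') /\
    psum g (h::l) - eta <= psum g (h::l').
Proof.
  intros Hc Hr1 Hgr He. induction l as [|a l IH]; intros h S F.
  - apply Forall_inv in F as Fh.
    destruct (classic (g h = x)) as [Hx|Hx].
    + left. constructor; auto.
    + right. destruct (sup_lemma g h r x eta Hc ltac:(lra) ltac:(lra) Hr1 Hx Hgr He) as [s [Hs [Hs2 Hs3]]].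
      exists s, (s :: nil). split; [lra|split; [auto|split; [auto|split; [|split]]]].
      * apply Sorted_cons; [apply Sorted_cons; auto | apply HdRel_cons; lra].
      * apply Forall_cons; [lra|]. apply Forall_cons; [lra|]. apply Forall_nil.
      * rewrite psum_cons2. simpl. pose proof (dist2_pos (g h) (g s)). lra.
  - apply Sorted_inv in S as [S Hd]. apply HdRel_inv in Hd.
    apply Forall_inv in F as Fh. apply Forall_inv_tail in F as Fa.
    destruct (IH a S Fa) as [Hall | [s [l' [Hs1 [Hs2 [Hs3 [Hs4 [Hs5 Hs6]]]]]]]].
    + destruct (classic (g h = x)) as [Hx|Hx].
      * left. constructor; auto.
      * right. destruct (sup_lemma g h r x eta Hc ltac:(lra) ltac:(lra) Hr1 Hx Hgr He) as [s [Hs [Hs2 Hs3]]].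
        exists s, (s :: nil). split; [lra|split; [auto|split; [auto|split; [|split]]]].
        -- apply Sorted_cons; [apply Sorted_cons; auto | apply HdRel_cons; lra].
        -- apply Forall_cons; [lra|]. apply Forall_cons; [lra|]. apply Forall_nil.
        -- rewrite !psum_cons2. rewrite (psum_const g x (a::l) Hall).
           apply Forall_inv in Hall. rewrite Hall. simpl.
           pose proof (dist2_tri (g h) (g s) x). lra.
    + right. exists s, (a :: l'). split; [lra|split; [auto|split; [auto|split; [|split]]]].
      * apply Sorted_cons; [exact Hs4| apply HdRel_cons; lra].
      * apply Forall_cons; [lra|]. eapply Forall_impl; [|exact Hs5]. simpl; intros t Ht; lra.
      * rewrite !psum_cons2. lra.
Qed.

Lemma lt_div J a b : 0 < J -> J * a < b -> a < b / J.
Proof. intros HJ H. apply Rmult_lt_reg_l with J; auto. replace (J * (b / J)) with b by (field; lra). lra. Qed.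

Lemma div_lt J a b : 0 < J -> a < b / J -> J * a < b.
Proof. intros HJ H. apply Rmult_lt_compat_l with (r := J) in H; auto. replace (J * (b / J)) with b in H by (field; lra). lra. Qed.

Lemma key g J p r : 1 <= J -> is_curve g -> locally_rectifiable g -> 0 <= r <= 1 ->
  g r = g 0 -> dist2 p (g 0) < len g 0 r / J -> car g J p.
Proof.
  intros HJ Hc Hlr Hr Hgr Hp.
  set (x := g 0) in *.
  set (L := len g 0 r) in *.
  assert (Hrr : rectifiable g 0 r) by (apply Hlr; lra).
  apply div_lt in Hp; [|lra].
  pose proof (dist2_pos p x) as HA.
  set (d := L - J * dist2 p x).
  assert (Hd : 0 < d) by (unfold d; lra).
  assert (HdL : d <= L) by (unfold d; nra).
  set (eta := d / (4 * (J + 1))).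
  assert (Heta : 0 < eta) by (unfold eta; apply Rdiv_lt_0_compat; lra).
  assert (Heta2 : (J + 1) * eta = d / 4) by (unfold eta; field; lra).
  destruct (len_approx g 0 r (d/2) Hrr ltac:(lra)) as [l [Sl [Fl Pl]]].
  fold L in Pl.
  assert (S0 : Sorted.Sorted Rle (0 :: l)).
  { apply Sorted_cons; auto. destruct l as [|b l']; constructor. apply Forall_inv in Fl; lra. }
  assert (F0 : List.Forall (fun t => 0 <= t <= r) (0 :: l)).
  { apply Forall_cons; [lra|auto]. }
  assert (P0 : psum g l <= psum g (0 :: l)).
  { pose proof (psum_app g (0 :: nil) l) as Ha. change (psum g (0::nil)) with 0 in Ha. change ((0::nil) ++ l) with (0::l) in Ha. lra. }
  destruct (tail_lemma g r x eta Hc ltac:(lra) Hgr Heta l 0 S0 F0) as [Hall | [s [l' [Hs1 [Hs2 [Hs3 [Hs4 [Hs5 Hs6]]]]]]]].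
  - rewrite (psum_const g x _ Hall) in P0. lra.
  - assert (Hs0 : s <> 0) by (intro E; subst s; now apply Hs2).
    assert (Hrs : rectifiable g 0 s) by (apply Hlr; lra).
    assert (Hls : psum g (0 :: l') <= len g 0 s).
    { apply len_ub; auto. exists (0 :: l'). split; [exact Hs4|]. split; [|reflexivity].
      eapply Forall_impl; [|exact Hs5]. simpl; intros t Ht; lra. }
    exists s. split; [lra|]. split; [auto|].
    apply lt_div; [lra|].
    pose proof (dist2_tri p x (g s)) as Ht. rewrite (dist2_sym x) in Ht.
    assert (J * dist2 p (g s) <= J * dist2 p x + J * eta) by (rewrite <- Rmult_plus_distr_l; apply Rmult_le_compat_l; lra).
    assert (Hdd : J * dist2 p x = L - d) by (unfold d; ring).
    lra.
Qed.

Lemma ball_in_car g J p r : 1 <= J -> is_curve g -> locally_rectifiable g -> 0 < r <= 1 ->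
  dist2 p (g r) < len g 0 r / J -> car g J p.
Proof.
  intros HJ Hc Hlr Hr Hp.
  destruct (classic (g r = g 0)) as [E|E].
  - apply (key g J p r HJ Hc Hlr ltac:(lra) E). rewrite <- E; auto.
  - exists r. auto.
Qed.

Lemma path_lemma (D U V : pt -> Prop) b : is_curve b -> (forall t, 0 <= t <= 1 -> D (b t)) ->
  open2 U -> open2 V -> (forall p, D p -> U p \/ V p) -> (forall p, D p -> U p -> V p -> False) ->
  U (b 0) -> U (b 1).
Proof.
  intros Hc HD HU HV Hcov Hdis H0.
  set (S := fun t => 0 <= t <= 1 /\ forall s, 0 <= s <= t -> U (b s)).
  destruct (completeness S) as [m [Hub Hlub]].
  { exists 1. intros t [Ht _]. lra. }
  { exists 0. split; [lra|]. intros s Hs. replace s with 0 by lra. auto. }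
  assert (Hm0 : 0 <= m).
  { apply Hub. split; [lra|]. intros s Hs. replace s with 0 by lra. auto. }
  assert (Hm1 : m <= 1) by (apply Hlub; intros t [Ht _]; lra).
  assert (C : forall s, 0 <= s < m -> U (b s)).
  { intros s Hs. apply NNPP. intro Hn.
    assert (m <= s); [|lra]. apply Hlub. intros t [Ht1 Ht2].
    apply Rnot_lt_le. intro. apply Hn. apply Ht2. lra. }
  destruct (Hcov (b m) (HD m ltac:(lra))) as [Hm|Hm].
  - destruct (HU _ Hm) as [rho [Hrho Hball]].
    destruct (Hc m ltac:(lra) rho Hrho) as [d [Hd Hcd]].
    destruct (Rlt_dec m 1) as [Hlt|Hge].
    + exfalso. set (q := Rmin 1 (m + d/2)).
      assert (Hq : m < q <= 1) by (unfold q, Rmin; destruct Rle_dec; lra).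
      assert (q <= m); [|lra]. apply Hub. split; [lra|].
      intros s Hs. destruct (Rlt_dec s m) as [Hsm|Hsm]; [apply C; lra|].
      apply Hball. apply Hcd; [lra|].
      unfold q, Rmin in *; destruct Rle_dec; unfold Rabs; destruct Rcase_abs; lra.
    + replace 1 with m by lra. auto.
  - exfalso. destruct (HV _ Hm) as [rho [Hrho Hball]].
    destruct (Hc m ltac:(lra) rho Hrho) as [d [Hd Hcd]].
    set (s := Rmax 0 (m - d/2)).
    assert (Hs : 0 <= s <= m) by (unfold s, Rmax; destruct Rle_dec; lra).
    assert (HVs : V (b s)).
    { apply Hball. apply Hcd; [lra|]. unfold s, Rmax; destruct Rle_dec; unfold Rabs; destruct Rcase_abs; lra. }
    assert (HUs : U (b s)).
    { destruct (Rlt_dec s m) as [Hsm|Hsm]; [apply C; lra|].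
      assert (s = 0) by (unfold s, Rmax in *; destruct Rle_dec; lra).
      rewrite H. auto. }
    apply (Hdis (b s)); auto. apply HD. lra.
Qed.

Lemma car_open g J : open2 (car g J).
Proof.
  intros p [t [Ht [Hne Hd]]].
  exists (len g 0 t / J - dist2 p (g t)). split; [lra|].
  intros q Hq. exists t. split; auto. split; auto.
  pose proof (dist2_tri q p (g t)). lra.
Qed.

Definition seg (z w : pt) (a : R) : pt := (fst z + a * (fst w - fst z), snd z + a * (snd w - snd z)).
Definition phi (t0 t : R) : R := t0 + (2*t - 1) * (1 - t0).
Definition gz (g : R -> pt) (z : pt) (t0 : R) (t : R) : pt :=
  (fst (seg z (g t0) (2 * Rmin t (1/2))) + fst (g (phi t0 (Rmax t (1/2)))) - fst (g t0),
   snd (seg z (g t0) (2 * Rmin t (1/2))) + snd (g (phi t0 (Rmax t (1/2)))) - snd (g t0)).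

Lemma seg_dist z w a b : dist2 (seg z w a) (seg z w b) = Rabs (a - b) * dist2 z w.
Proof.
  unfold dist2, seg; cbn [fst snd].
  replace ((fst z + a * (fst w - fst z) - (fst z + b * (fst w - fst z))) ^ 2 +
    (snd z + a * (snd w - snd z) - (snd z + b * (snd w - snd z))) ^ 2)
    with (Rsqr (a - b) * ((fst z - fst w) ^ 2 + (snd z - snd w) ^ 2)) by (unfold Rsqr; ring).
  rewrite sqrt_mult_alt by apply Rle_0_sqr. rewrite sqrt_Rsqr_abs. reflexivity.
Qed.

Lemma seg0 z w : seg z w 0 = z.
Proof. destruct z; unfold seg; simpl; f_equal; ring. Qed.
Lemma seg1 z w : seg z w 1 = w.
Proof. destruct z, w; unfold seg; simpl; f_equal; ring. Qed.

Lemma phi_half t0 : phi t0 (1/2) = t0.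
Proof. unfold phi. field. Qed.

Lemma gz_left g z t0 t : t <= 1/2 -> gz g z t0 t = seg z (g t0) (2 * t).
Proof.
  intros H. unfold gz. rewrite Rmin_left by lra. rewrite Rmax_right by lra. rewrite phi_half.
  destruct (seg z (g t0) (2 * t)). simpl. f_equal; ring.
Qed.

Lemma gz_right g z t0 t : 1/2 <= t -> gz g z t0 t = g (phi t0 t).
Proof.
  intros H. unfold gz. rewrite Rmin_right by lra. rewrite Rmax_left by lra.
  replace (2 * (1/2)) with 1 by field. rewrite seg1.
  destruct (g (phi t0 t)). simpl. f_equal; ring.
Qed.

Lemma dist2_sum a1 a2 b1 b2 c1 c2 p2 q2 :
  dist2 (a1 + b1 - c1, a2 + b2 - c2) (fst p2 + fst q2 - c1, snd p2 + snd q2 - c2)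
  <= dist2 (a1, a2) p2 + dist2 (b1, b2) q2.
Proof.
  unfold dist2; simpl.
  replace (a1 + b1 - c1 - (fst p2 + fst q2 - c1)) with ((a1 - fst p2) + (b1 - fst q2)) by ring.
  replace (a2 + b2 - c2 - (snd p2 + snd q2 - c2)) with ((a2 - snd p2) + (b2 - snd q2)) by ring.
  apply mink.
Qed.

Lemma Rmin_lip s t c : Rabs (Rmin s c - Rmin t c) <= Rabs (s - t).
Proof. unfold Rmin; destruct Rle_dec; destruct Rle_dec; unfold Rabs; repeat destruct Rcase_abs; lra. Qed.
Lemma Rmax_lip s t c : Rabs (Rmax s c - Rmax t c) <= Rabs (s - t).
Proof. unfold Rmax; destruct Rle_dec; destruct Rle_dec; unfold Rabs; repeat destruct Rcase_abs; lra. Qed.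

Lemma phi_range t0 t : 0 <= t0 <= 1 -> 1/2 <= t <= 1 -> t0 <= phi t0 t <= 1.
Proof. intros H1 H2. unfold phi. nra. Qed.

Lemma gz_curve g z t0 : is_curve g -> 0 <= t0 <= 1 -> is_curve (gz g z t0).
Proof.
  intros Hc Ht0 t Ht eps He.
  set (K := dist2 z (g t0)).
  assert (HK : 0 <= K) by apply dist2_pos.
  assert (Hpt : 0 <= phi t0 (Rmax t (1/2)) <= 1).
  { assert (1/2 <= Rmax t (1/2) <= 1) by (unfold Rmax; destruct Rle_dec; lra).
    pose proof (phi_range t0 (Rmax t (1/2)) Ht0 H). lra. }
  destruct (Hc _ Hpt (eps/2) ltac:(lra)) as [d1 [Hd1 Hc1]].
  exists (Rmin (d1/2) (eps / (4 * (K + 1)))).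
  split. { apply Rmin_pos; [lra|]. apply Rdiv_lt_0_compat; lra. }
  intros s Hs Hst.
  assert (Hst1 : Rabs (s - t) < d1/2) by (eapply Rlt_le_trans; [exact Hst|apply Rmin_l]).
  assert (Hst2 : Rabs (s - t) < eps / (4 * (K + 1))) by (eapply Rlt_le_trans; [exact Hst|apply Rmin_r]).
  assert (Hst3 : Rabs (s - t) * (K + 1) < eps / 4).
  { apply Rmult_lt_compat_r with (r := K + 1) in Hst2; [|lra].
    replace (eps / (4 * (K + 1)) * (K + 1)) with (eps / 4) in Hst2 by (field; lra). exact Hst2. }
  unfold gz at 1.
  destruct (seg z (g t0) (2 * Rmin s (1/2))) as [a1 a2] eqn:Ea.
  destruct (g (phi t0 (Rmax s (1/2)))) as [b1 b2] eqn:Eb.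
  simpl fst; simpl snd.
  unfold gz.
  eapply Rle_lt_trans; [apply dist2_sum|].
  rewrite <- Ea, <- Eb.
  rewrite seg_dist. fold K.
  assert (A1 : Rabs (2 * Rmin s (1/2) - 2 * Rmin t (1/2)) * K <= eps / 2).
  { replace (2 * Rmin s (1/2) - 2 * Rmin t (1/2)) with (2 * (Rmin s (1/2) - Rmin t (1/2))) by ring.
    rewrite Rabs_mult. rewrite (Rabs_right 2) by lra.
    pose proof (Rmin_lip s t (1/2)). pose proof (Rabs_pos (s - t)).
    pose proof (Rabs_pos (Rmin s (1 / 2) - Rmin t (1 / 2))).
    assert (Rabs (Rmin s (1 / 2) - Rmin t (1 / 2)) * K <= Rabs (s - t) * K) by (apply Rmult_le_compat_r; lra).
    assert (Rabs (s - t) * K <= Rabs (s - t) * (K + 1)) by (apply Rmult_le_compat_l; lra).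
    lra. }
  assert (A2 : dist2 (g (phi t0 (Rmax s (1/2)))) (g (phi t0 (Rmax t (1/2)))) < eps / 2).
  { apply Hc1.
    - assert (1/2 <= Rmax s (1/2) <= 1) by (unfold Rmax; destruct Rle_dec; lra).
      pose proof (phi_range t0 (Rmax s (1/2)) Ht0 H). lra.
    - unfold phi.
      replace (t0 + (2 * Rmax s (1 / 2) - 1) * (1 - t0) - (t0 + (2 * Rmax t (1 / 2) - 1) * (1 - t0)))
        with ((2 * (1 - t0)) * (Rmax s (1/2) - Rmax t (1/2))) by ring.
      rewrite Rabs_mult. rewrite (Rabs_right (2 * (1 - t0))) by lra.
      pose proof (Rmax_lip s t (1/2)). pose proof (Rabs_pos (Rmax s (1 / 2) - Rmax t (1 / 2))). nra. }
  lra.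
Qed.

Lemma psum_one g h : psum g (h :: nil) = 0.
Proof. reflexivity. Qed.

Lemma leftB g z t0 t : t <= 1/2 -> forall l h, Sorted.Sorted Rle (h::l) ->
  List.Forall (fun x => 0 <= x <= t) (h::l) ->
  psum (gz g z t0) (h::l) <= 2 * (t - h) * dist2 z (g t0).
Proof.
  intros Ht. pose proof (dist2_pos z (g t0)) as HK.
  induction l as [|a l IH]; intros h S F.
  - rewrite psum_one. apply Forall_inv in F. nra.
  - apply Sorted_inv in S as [S Hd]. apply HdRel_inv in Hd.
    apply Forall_inv in F as Fh. apply Forall_inv_tail in F as Fa.
    apply Forall_inv in Fa as Fa0.
    rewrite psum_cons2. specialize (IH a S Fa).
    rewrite (gz_left g z t0 h) by lra. rewrite (gz_left g z t0 a) by lra.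
    rewrite seg_dist. rewrite Rabs_left1 by lra. nra.
Qed.

Lemma len_left g z t0 t : 0 <= t <= 1/2 ->
  rectifiable (gz g z t0) 0 t /\ len (gz g z t0) 0 t <= 2 * t * dist2 z (g t0).
Proof.
  intros Ht. pose proof (dist2_pos z (g t0)) as HK. apply len_bound.
  intros P [l [S [F ->]]]. destruct l as [|h l].
  - simpl. nra.
  - pose proof (leftB g z t0 t ltac:(lra) l h S F). apply Forall_inv in F. nra.
Qed.

Lemma phi_mono t0 a b : t0 <= 1 -> a <= b -> phi t0 a <= phi t0 b.
Proof. intros. unfold phi. nra. Qed.

Definition Bf g z t0 r h :=
  if Rle_dec h (1/2) then (1 - 2*h) * dist2 z (g t0) + len g t0 r else len g (phi t0 h) r.

Lemma rightB g z t0 t : locally_rectifiable g -> 0 <= t0 <= 1 -> 1/2 <= t <= 1 ->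
  forall l h, Sorted.Sorted Rle (h::l) ->
  List.Forall (fun x => 0 <= x <= t) (h::l) ->
  psum (gz g z t0) (h::l) <= Bf g z t0 (phi t0 t) h.
Proof.
  intros Hlr Ht0 Ht. pose proof (dist2_pos z (g t0)) as HK.
  pose proof (phi_range t0 t Ht0 Ht) as Hr.
  induction l as [|a l IH]; intros h S F.
  - rewrite psum_one. apply Forall_inv in F. unfold Bf. destruct Rle_dec as [Hh|Hh]; [|apply Rnot_le_lt in Hh].
    + pose proof (len_ge0 g t0 (phi t0 t) (Hlr t0 (phi t0 t) ltac:(lra) ltac:(lra) ltac:(lra))). nra.
    + pose proof (phi_range t0 h Ht0 ltac:(lra)). pose proof (phi_mono t0 h t ltac:(lra) ltac:(lra)).
      apply len_ge0. apply Hlr; lra.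
  - apply Sorted_inv in S as [S Hd]. apply HdRel_inv in Hd.
    apply Forall_inv in F as Fh. apply Forall_inv_tail in F as Fa.
    apply Forall_inv in Fa as Fa0.
    rewrite psum_cons2. specialize (IH a S Fa).
    eapply Rle_trans; [apply Rplus_le_compat_l; exact IH|].
    set (r := phi t0 t) in *.
    unfold Bf. destruct (Rle_dec h (1/2)) as [Hh|Hh]; destruct (Rle_dec a (1/2)) as [Ha|Ha];
      try apply Rnot_le_lt in Hh; try apply Rnot_le_lt in Ha.
    + rewrite (gz_left g z t0 h) by lra. rewrite (gz_left g z t0 a) by lra.
      rewrite seg_dist. rewrite Rabs_left1 by lra. nra.
    + rewrite (gz_left g z t0 h) by lra. rewrite (gz_right g z t0 a) by lra.
      pose proof (phi_range t0 a Ht0 ltac:(lra)) as Hpa.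
      pose proof (phi_mono t0 a t ltac:(lra) ltac:(lra)) as Hpat. fold r in Hpat.
      pose proof (dist2_tri (seg z (g t0) (2 * h)) (seg z (g t0) 1) (g (phi t0 a))) as T.
      rewrite seg_dist in T. rewrite seg1 in T. rewrite Rabs_left1 in T by lra.
      pose proof (two_pt g t0 (phi t0 a) ltac:(lra) (Hlr t0 (phi t0 a) ltac:(lra) ltac:(lra) ltac:(lra))).
      pose proof (superadd' g t0 (phi t0 a) r Hlr ltac:(lra) ltac:(lra) ltac:(lra) ltac:(lra)).
      nra.
    + exfalso. lra.
    + rewrite (gz_right g z t0 h) by lra. rewrite (gz_right g z t0 a) by lra.
      pose proof (phi_range t0 h Ht0 ltac:(lra)) as Hph.
      pose proof (phi_mono t0 h a ltac:(lra) ltac:(lra)) as Hpha.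
      pose proof (phi_mono t0 a t ltac:(lra) ltac:(lra)) as Hpat. fold r in Hpat.
      pose proof (two_pt g (phi t0 h) (phi t0 a) ltac:(lra) (Hlr (phi t0 h) (phi t0 a) ltac:(lra) ltac:(lra) ltac:(lra))).
      pose proof (superadd' g (phi t0 h) (phi t0 a) r Hlr ltac:(lra) ltac:(lra) ltac:(lra) ltac:(lra)).
      lra.
Qed.

Lemma len_right g z t0 t : locally_rectifiable g -> 0 <= t0 <= 1 -> 1/2 <= t <= 1 ->
  rectifiable (gz g z t0) 0 t /\ len (gz g z t0) 0 t <= dist2 z (g t0) + len g t0 (phi t0 t).
Proof.
  intros Hlr Ht0 Ht. pose proof (dist2_pos z (g t0)) as HK.
  pose proof (phi_range t0 t Ht0 Ht) as Hr.
  pose proof (len_ge0 g t0 (phi t0 t) (Hlr t0 (phi t0 t) ltac:(lra) ltac:(lra) ltac:(lra))).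
  apply len_bound.
  intros P [l [S [F ->]]]. destruct l as [|h l].
  - simpl. lra.
  - pose proof (rightB g z t0 t Hlr Ht0 Ht l h S F) as HB. apply Forall_inv in F.
    unfold Bf in HB. destruct Rle_dec as [Hh|Hh]; [|apply Rnot_le_lt in Hh].
    + nra.
    + pose proof (phi_range t0 h Ht0 ltac:(lra)). pose proof (phi_mono t0 h t ltac:(lra) ltac:(lra)).
      pose proof (len_mono_l g t0 (phi t0 h) (phi t0 t) Hlr ltac:(lra) ltac:(lra) ltac:(lra) ltac:(lra)).
      lra.
Qed.

Lemma div_le_self a J : 0 <= a -> 1 <= J -> a / J <= a.
Proof.
  intros Ha HJ. apply Rmult_le_reg_l with J; [lra|].
  replace (J * (a / J)) with a by (field; lra). nra.
Qed.

Lemma div_le_compat a b J : a <= b -> 1 <= J -> a / J <= b / J.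
Proof. intros. unfold Rdiv. apply Rmult_le_compat_r; auto. left. apply Rinv_0_lt_compat. lra. Qed.

Lemma div_nonneg a J : 0 <= a -> 1 <= J -> 0 <= a / J.
Proof. intros. unfold Rdiv. apply Rmult_le_pos; auto. left. apply Rinv_0_lt_compat. lra. Qed.

Lemma construct (J : R) (y : pt) (g : R -> pt) z :
  1 <= J -> is_curve g -> g 1 = y -> locally_rectifiable g -> car g J z ->
    exists (gz : R -> pt) (s u : R) (phi : R -> R),
      (is_curve gz /\ gz 0 = z /\ gz 1 = y /\ rectifiable gz 0 1 /\
      0 <= s <= 1 /\ 0 <= u <= 1 /\ phi u = s /\ phi 1 = 1 /\
      (forall t1 t2, u <= t1 -> t1 <= t2 -> t2 <= 1 -> phi t1 <= phi t2) /\
      (forall r, s <= r <= 1 -> exists t, u <= t <= 1 /\ phi t = r) /\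
      (forall t, u <= t <= 1 -> gz t = g (phi t)) /\
      (forall t, u <= t <= 1 -> len gz 0 t <= len g 0 (phi t)) /\
      subset2 (car gz J) (car g J)) /\
      (forall t, 0 <= t <= 1 -> car g J (gz t)).
Proof.
  intros HJ Hc Hy Hlr [t0 [Ht0 [Hne Hz]]].
  set (K := dist2 z (g t0)).
  assert (HK : 0 <= K) by apply dist2_pos.
  set (L0 := len g 0 t0) in *.
  assert (HL0 : 0 <= L0) by (apply len_ge0; apply Hlr; lra).
  assert (HKL : K < L0) by (pose proof (div_le_self L0 J HL0 HJ); unfold K; lra).
  assert (Ht0' : 0 <= t0 <= 1) by lra.
  exists (gz g z t0), t0, (1/2), (phi t0).
  split.
  2: { intros t Ht. destruct (Rle_dec t (1/2)) as [Hh|Hh]; [|apply Rnot_le_lt in Hh].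
       - exists t0. split; [auto|split; [auto|]].
         rewrite gz_left by lra. rewrite <- (seg1 z (g t0)) at 2. rewrite seg_dist.
         rewrite Rabs_left1 by lra. fold K in Hz. fold K. fold L0. nra.
       - rewrite gz_right by lra.
         pose proof (phi_range t0 t Ht0' ltac:(lra)) as Hr.
         apply (ball_in_car g J _ (phi t0 t) HJ Hc Hlr ltac:(lra)).
         rewrite dist2_refl.
         pose proof (len_mono g 0 t0 (phi t0 t) Hlr ltac:(lra) ltac:(lra) ltac:(lra) ltac:(lra)) as Hm.
         change (len g 0 t0) with L0 in Hm.
         assert (0 < len g 0 (phi t0 t)) by lra.
         unfold Rdiv. apply Rmult_lt_0_compat; auto. apply Rinv_0_lt_compat; lra. }
  split; [apply gz_curve; auto|].
  split. { rewrite gz_left by lra. replace (2 * 0) with 0 by ring. apply seg0. }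
  split. { rewrite gz_right by lra. unfold phi. replace (t0 + (2 * 1 - 1) * (1 - t0)) with 1 by ring. auto. }
  split. { apply (len_right g z t0 1 Hlr Ht0'); lra. }
  split; [lra|]. split; [lra|].
  split; [apply phi_half|].
  split; [unfold phi; ring|].
  split. { intros t1 t2 H1 H2 H3. apply phi_mono; lra. }
  split. { intros r Hr. destruct (Req_dec t0 1) as [E|E].
           - exists 1. split; [lra|]. unfold phi. rewrite E. lra.
           - exists (1/2 + (r - t0) / (2 * (1 - t0))). split.
             + assert (0 <= (r - t0) / (2 * (1 - t0)) <= 1/2); [|lra].
               split. * apply Rdiv_le_0_compat; lra.
               * apply Rmult_le_reg_l with (2 * (1 - t0)); [lra|].
                 replace (2 * (1 - t0) * ((r - t0) / (2 * (1 - t0)))) with (r - t0) by (field; lra). lra.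
             + unfold phi. field. lra. }
  split. { intros t Ht. apply gz_right; lra. }
  assert (Hlen : forall t, 1/2 <= t <= 1 -> len (gz g z t0) 0 t <= len g 0 (phi t0 t)).
  { intros t Ht. destruct (len_right g z t0 t Hlr Ht0' Ht) as [_ H1].
    pose proof (phi_range t0 t Ht0' Ht) as Hr.
    pose proof (superadd' g 0 t0 (phi t0 t) Hlr ltac:(lra) ltac:(lra) ltac:(lra) ltac:(lra)) as Hs.
    change (len g 0 t0) with L0 in Hs. fold K in H1. lra. }
  split; [exact Hlen|].
  intros p [t [Ht [Hne2 Hp]]].
  destruct (Rle_dec t (1/2)) as [Hh|Hh]; [|apply Rnot_le_lt in Hh].
  - destruct (len_left g z t0 t ltac:(lra)) as [_ H1]. fold K in H1.
    exists t0. split; [auto|split; [auto|]].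
    rewrite gz_left in Hp by lra.
    pose proof (dist2_tri p (seg z (g t0) (2 * t)) (seg z (g t0) 1)) as T.
    rewrite seg_dist, seg1 in T. rewrite Rabs_left1 in T by lra. fold K in T.
    pose proof (div_le_compat _ _ J H1 HJ).
    pose proof (div_le_self (2 * t * K) J ltac:(nra) HJ).
    fold L0. fold K in Hz. lra.
  - rewrite gz_right in Hp by lra.
    pose proof (phi_range t0 t Ht0' ltac:(lra)) as Hr.
    apply (ball_in_car g J p (phi t0 t) HJ Hc Hlr ltac:(lra)).
    pose proof (div_le_compat _ _ J (Hlen t ltac:(lra)) HJ). lra.
Qed.

Theorem propositionA1 (J : R) (x y : pt) (g : R -> pt) :
  1 <= J ->
  is_curve g -> g 0 = x -> g 1 = y -> locally_rectifiable g ->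
  carrot_John (car g J) J y /\
  forall z, car g J z ->
    exists (gz : R -> pt) (s u : R) (phi : R -> R),
      is_curve gz /\ gz 0 = z /\ gz 1 = y /\ rectifiable gz 0 1 /\
      (* eta = g s; the tail gz[u,1] is the tail g[s,1] up to the
         monotone surjective reparametrization phi : [u,1] -> [s,1] *)
      0 <= s <= 1 /\ 0 <= u <= 1 /\ phi u = s /\ phi 1 = 1 /\
      (forall t1 t2, u <= t1 -> t1 <= t2 -> t2 <= 1 -> phi t1 <= phi t2) /\
      (forall r, s <= r <= 1 -> exists t, u <= t <= 1 /\ phi t = r) /\
      (forall t, u <= t <= 1 -> gz t = g (phi t)) /\
      (* for each a = gz t = g (phi t) on the common tail *)
      (forall t, u <= t <= 1 -> len gz 0 t <= len g 0 (phi t)) /\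
      subset2 (car gz J) (car g J).
Proof.
  intros HJ Hc Hx Hy Hlr.
  split.
  - split.
    + split; [apply car_open|].
      intros [U [V [HU [HV [Hcov [[p [Dp Up]] [[q [Dq Vq]] Hdis]]]]]]].
      destruct (construct J y g p HJ Hc Hy Hlr Dp) as [b1 [_ [_ [_ [[Hb1 [Hb10 [Hb11 _]]] Hin1]]]]].
      destruct (construct J y g q HJ Hc Hy Hlr Dq) as [b2 [_ [_ [_ [[Hb2 [Hb20 [Hb21 _]]] Hin2]]]]].
      assert (HUy : U (b1 1)).
      { apply (path_lemma (car g J) U V b1 Hb1 Hin1 HU HV Hcov Hdis). rewrite Hb10. auto. }
      assert (HVy : V (b2 1)).
      { apply (path_lemma (car g J) V U b2 Hb2 Hin2 HV HU).
        - intros r Hr. destruct (Hcov r Hr); auto.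
        - intros r Hr H1 H2. apply (Hdis r); auto.
        - rewrite Hb20. auto. }
      rewrite Hb11 in HUy. rewrite Hb21 in HVy.
      apply (Hdis y); auto. rewrite <- Hb11. apply Hin1. lra.
    + intros p Dp.
      destruct (construct J y g p HJ Hc Hy Hlr Dp) as [b [s [u [ph [H Hin]]]]].
      destruct H as (Hb & Hb0 & Hb1 & Hr & _ & _ & _ & _ & _ & _ & _ & _ & Hsub).
      exists b. repeat split; auto.
  - intros z Hz. destruct (construct J y g z HJ Hc Hy Hlr Hz) as [b [s [u [ph [H _]]]]].
    exists b, s, u, ph. exact H.
Qed.
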